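(* Let $\mathcal{E}=G_2([-1,1])$ be the set of the $256$ global maps of elementary cellular automata. Under the equivalence relation $\sim$ (generated by state permutation, reflection, shift and scaling, as defined in the context) restricted to $\mathcal{E}$, the set $\mathcal{E}$ splits into exactly $81$ equivalence classes.
   Context: For finite $M=\{j_1<\dots<j_m\}\subset\mathbb{Z}$ and $f:\{0,1\}^m\to\{0,1\}$, $\Phi^M_f(x)_i=f(x_{i+j_1}\dots x_{i+j_m})$ on $\{0,1\}^{\mathbb{Z}}$; $G_2([-1,1])=\{\Phi^{\{-1,0,1\}}_f\mid f:\{0,1\}^3\to\{0,1\}\}$. Operators on global maps: $\sigma\Phi=\sigma\circ\Phi$ with $(\sigma x)_i=x_{i+1}$; $\hat c\Phi(x)=c\Phi(cx)$ where $c$ swaps $0$ and $1$ in every cell; $\hat r\Phi(x)=r\Phi(rx)$ with $(rx)_i=x_{-i}$. $\Phi\cong\Psi$ iff $\Psi=\tau\Phi$ for some $\tau$ in the group generated by $\sigma,\hat r,\hat c$. Scaling: for a positive rational $v$ and a global map with a representation $\Phi=\Phi^M_f$ where $vM=\{vi\mid i\in M\}\subseteq\mathbb{Z}$, $\hat s_v\Phi=\Phi^{vM}_f$. $\Phi\sim\Psi$ iff there are global maps $\Phi',\Psi'$ and a positive rational $v$ with $\Phi\cong\Phi'$, $\Psi\cong\Psi'$ and $\Psi'=\hat s_v\Phi'$. *)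

(* Defs.v *)
From mathcomp Require Import all_boot all_order all_algebra.
From Stdlib Require Import Relations.
Set Implicit Arguments. Unset Strict Implicit. Unset Printing Implicit Defensive.
Import Order.TTheory GRing.Theory Num.Theory.
Local Open Scope ring_scope.

Definition config := int -> bool.
Definition gmap := config -> config.

(* Phi^M_f(x)_i = f(x_{i+j_1} ... x_{i+j_m}), M = [:: j_1; ...; j_m]
   listed in strictly increasing order.  f is only ever applied to words
   of length m = size M, so f : seq bool -> bool represents an arbitrary
   f : {0,1}^m -> {0,1}. *)
Definition phi (M : seq int) (f : seq bool -> bool) : gmap :=
  fun x i => f [seq x (i + j) | j <- M].

Definition ECA (Phi : gmap) : Prop :=
  exists f : seq bool -> bool, Phi = phi [:: -1; 0; 1] f.

Definition shift (x : config) : config := fun i => x (i + 1).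
Definition shiftinv (x : config) : config := fun i => x (i - 1).
Definition cswap (x : config) : config := fun i => ~~ x i.
Definition refl (x : config) : config := fun i => x (- i).

Definition sigmaOp (Phi : gmap) : gmap := fun x => shift (Phi x).
Definition sigmaInvOp (Phi : gmap) : gmap := fun x => shiftinv (Phi x).
Definition cHat (Phi : gmap) : gmap := fun x => cswap (Phi (cswap x)).
Definition rHat (Phi : gmap) : gmap := fun x => refl (Phi (refl x)).

(* The group generated by sigma, rHat, cHat: all finite compositions of
   the generators and their inverses (rHat, cHat are involutions, the
   inverse of sigma is sigmaInvOp). *)
Inductive in_group : (gmap -> gmap) -> Prop :=
| grp_id : in_group (fun Phi => Phi)
| grp_sigma t : in_group t -> in_group (fun Phi => sigmaOp (t Phi))
| grp_sigmainv t : in_group t -> in_group (fun Phi => sigmaInvOp (t Phi))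
| grp_r t : in_group t -> in_group (fun Phi => rHat (t Phi))
| grp_c t : in_group t -> in_group (fun Phi => cHat (t Phi)).

Definition cong (Phi Psi : gmap) : Prop :=
  exists t, in_group t /\ Psi = t Phi.

Definition scaled (v : rat) (Phi Psi : gmap) : Prop :=
  exists (M : seq int) (f : seq bool -> bool) (vM : seq int),
    sorted (fun a b : int => a < b) M /\
    Phi = phi M f /\
    [seq (j%:~R : rat) | j <- vM] = [seq v * (j%:~R : rat) | j <- M] /\
    Psi = phi vM f.

Definition sim (Phi Psi : gmap) : Prop :=
  exists (Phi' Psi' : gmap) (v : rat),
    0 < v /\ cong Phi Phi' /\ cong Psi Psi' /\ scaled v Phi' Psi'.

(* equivalence relation generated by sim (coincides with sim when sim is
   an equivalence relation, as stated in the paper) *)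
Definition simE : gmap -> gmap -> Prop := clos_refl_sym_trans gmap sim.

(* Main.v *)
Require Import Defs.
From mathcomp Require Import all_boot all_order all_algebra.
From mathcomp Require Import lra zify.
From Stdlib Require Import Relations FunctionalExtensionality.
Set Implicit Arguments. Unset Strict Implicit. Unset Printing Implicit Defensive.
Import Order.TTheory GRing.Theory Num.Theory.

Local Open Scope ring_scope.

Definition code (g : bool -> bool -> bool -> bool) : seq bool :=
  [:: g false false false; g false false true; g false true false; g false true true;
      g true false false; g true false true; g true true false; g true true true].
Definition dec (s : seq bool) (a b c : bool) : bool :=
  nth false s (4 * a + 2 * b + c)%N.
Lemma dec_code g a b c : dec (code g) a b c = g a b c.
Proof. by case: a; case: b; case: c. Qed.
Lemma code_ext g h : (forall a b c, g a b c = h a b c) -> code g = code h.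
Proof. by move=> e; rewrite /code !e. Qed.

Definition revc s := code (fun a b c => dec s c b a).
Definition compc s := code (fun a b c => ~~ dec s (~~ a) (~~ b) (~~ c)).
Definition op1 s := code (fun a b c => dec s a c c).
Definition op2 s := code (fun a b c => dec s a a c).

Definition sc (p : int) (a b c : bool) : config :=
  fun i => if i < p then a else if i == p then b else c.

Definition Gset (Phi : gmap) (s : seq bool) : Prop :=
  exists p q : int, s = code (fun a b c => Phi (sc p a b c) q).

Inductive clos (P : seq bool -> Prop) : seq bool -> Prop :=
| cl_in s : P s -> clos P s
| cl_1 s : clos P s -> clos P (op1 s)
| cl_2 s : clos P s -> clos P (op2 s)
| cl_r s : clos P s -> clos P (revc s)
| cl_c s : clos P s -> clos P (compc s).

Definition Kinv Phi := clos (Gset Phi).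

Lemma clos_mono (P Q : seq bool -> Prop) :
  (forall s, P s -> clos Q s) -> forall s, clos P s -> clos Q s.
Proof.
move=> h s; elim=> {s} [s /h //| s _ ih | s _ ih | s _ ih | s _ ih].
- exact: cl_1. - exact: cl_2. - exact: cl_r. - exact: cl_c.
Qed.

Lemma K_sigma Phi s : Kinv (sigmaOp Phi) s -> Kinv Phi s.
Proof.
apply: clos_mono => t [p [q ->]]; apply: cl_in; exists p, (q + 1).
by apply: code_ext.
Qed.

Lemma K_sigmainv Phi s : Kinv (sigmaInvOp Phi) s -> Kinv Phi s.
Proof.
apply: clos_mono => t [p [q ->]]; apply: cl_in; exists p, (q - 1).
by apply: code_ext.
Qed.

Lemma cswap_sc p a b c : cswap (sc p a b c) = sc p (~~ a) (~~ b) (~~ c).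
Proof. by apply: functional_extensionality => i; rewrite /cswap /sc; case: (i < p); case: (i == p). Qed.

Lemma K_c Phi s : Kinv (cHat Phi) s -> Kinv Phi s.
Proof.
apply: clos_mono => t [p [q ->]].
have -> : code (fun a b c => cHat Phi (sc p a b c) q) =
   compc (code (fun a b c => Phi (sc p a b c) q)).
  apply: code_ext => a b c; by rewrite dec_code /cHat cswap_sc /cswap.
by apply/cl_c/cl_in; exists p, q.
Qed.

Lemma refl_sc p a b c : refl (sc p a b c) = sc (- p) c b a.
Proof.
apply: functional_extensionality => i; rewrite /refl /sc.
rewrite ltrNl eqr_oppLR.
by case: (ltgtP i (-p)).
Qed.

Lemma K_r Phi s : Kinv (rHat Phi) s -> Kinv Phi s.
Proof.
apply: clos_mono => t [p [q ->]].
have -> : code (fun a b c => rHat Phi (sc p a b c) q) =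
   revc (code (fun a b c => Phi (sc (- p) a b c) (- q))).
  by apply: code_ext => a b c; rewrite dec_code /rHat refl_sc.
by apply/cl_r/cl_in; exists (- p), (- q).
Qed.

Local Open Scope ring_scope.

Definition Keq Phi Psi := forall s, Kinv Phi s <-> Kinv Psi s.

Lemma gm_ext (P Q : gmap) : (forall x i, P x i = Q x i) -> P = Q.
Proof.
move=> h; apply: functional_extensionality => x; apply: functional_extensionality => i; exact: h.
Qed.

Lemma sigma_inv1 Phi : sigmaInvOp (sigmaOp Phi) = Phi.
Proof. by apply: gm_ext => x i; rewrite /sigmaInvOp /sigmaOp /shiftinv /shift subrK. Qed.
Lemma sigma_inv2 Phi : sigmaOp (sigmaInvOp Phi) = Phi.
Proof. by apply: gm_ext => x i; rewrite /sigmaInvOp /sigmaOp /shiftinv /shift addrK. Qed.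
Lemma cswapK x : cswap (cswap x) = x.
Proof. by apply: functional_extensionality => i; rewrite /cswap negbK. Qed.
Lemma reflK x : refl (refl x) = x.
Proof. by apply: functional_extensionality => i; rewrite /refl opprK. Qed.
Lemma cHatK Phi : cHat (cHat Phi) = Phi.
Proof. by apply: gm_ext => x i; rewrite /cHat !cswapK. Qed.
Lemma rHatK Phi : rHat (rHat Phi) = Phi.
Proof. by apply: gm_ext => x i; rewrite /rHat !reflK. Qed.

Lemma Keq_group t Phi : in_group t -> Keq Phi (t Phi).
Proof.
elim=> {t} [|t _ ih|t _ ih|t _ ih|t _ ih] s; first by [].
- split=> [/ih h|/K_sigma/ih //]. by apply: K_sigmainv; rewrite sigma_inv1.
- split=> [/ih h|/K_sigmainv/ih //]. by apply: K_sigma; rewrite sigma_inv2.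
- split=> [/ih h|/K_r/ih //]. by apply: K_r; rewrite rHatK.
- split=> [/ih h|/K_c/ih //]. by apply: K_c; rewrite cHatK.
Qed.

Lemma map_rel (F G : int -> bool) (v : rat) M N :
  [seq (j%:~R : rat) | j <- N] = [seq v * (j%:~R : rat) | j <- M] ->
  (forall j j', (j'%:~R : rat) = v * j%:~R -> F j' = G j) -> map F N = map G M.
Proof.
elim: N M => [|j' N ih] [|j M] //= [e1 e2] h.
by rewrite (h _ _ e1) (ih _ e2 h).
Qed.

Lemma scale_sub (v : rat) M N f : 0 < v ->
  [seq (j%:~R : rat) | j <- N] = [seq v * (j%:~R : rat) | j <- M] ->
  forall s, Gset (phi N f) s -> clos (Gset (phi M f)) s.
Proof.
move=> v0 eMN s [p [q ->]].
set x : rat := (q - p)%:~R / v.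
set e := Num.floor x.
have hx : (q - p)%:~R = v * x by rewrite /x mulrC divfK // gt_eqF.
have key : forall j j', (j'%:~R : rat) = v * j%:~R ->
    (q + j' < p) = (x + j%:~R < 0) /\ (q + j' == p) = (x + j%:~R == 0).
  move=> j j' hj.
  have E : (q + j' - p)%:~R = v * (x + j%:~R).
    by rewrite mulrDr -hx -hj -!rmorphD /= addrAC.
  rewrite -subr_lt0 -subr_eq0 -(ltrz0 rat) -(intr_eq0 rat) E pmulr_rlt0 //.
  by rewrite mulf_eq0 gt_eqF.
have fl := floor_itv x; rewrite -/e in fl.
case: (boolP (e%:~R == x)) => [/eqP ex | nex].
- apply: cl_in; exists 0, e; apply: code_ext => a b c; rewrite /phi; congr f.
  apply: (map_rel eMN) => j j' hj; have [h1 h2] := key j j' hj.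
  by rewrite /sc h1 h2 -ex -rmorphD /= ltrz0 intr_eq0.
- have -> : code (fun a b c => phi N f (sc p a b c) q) =
      op1 (code (fun a b c => phi M f (sc 0 a b c) e)).
    apply: code_ext => a b c; rewrite dec_code /phi; congr f.
    apply: (map_rel eMN) => j j' hj; have [h1 h2] := key j j' hj.
    have hn : (x + j%:~R == 0) = false.
      apply/negbTE/negP => /eqP h0; move/negP: nex; apply; apply/eqP.
      have -> : e = - j.
        apply: floor_def; rewrite rmorphD rmorphN /=.
        apply/andP; split; lra.
      rewrite rmorphN /=; lra.
    have hl : (x + j%:~R < 0) = (e + j < 0).
      apply/idP/idP => h.
      + rewrite -(ltrz0 rat) rmorphD /=; lra.
      + have h' : e + j + 1 <= 0 by lia.
        move: h'; rewrite -(ler_int rat) !rmorphD /= => h'; lra.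
    rewrite /sc h2 h1 hn hl.
    case: (e + j < 0) => //.
    by case: (_ == 0).
  apply/cl_1/cl_in; by exists 0, e.
Qed.

Lemma Keq_scaled v Phi Psi : 0 < v -> scaled v Phi Psi -> Keq Phi Psi.
Proof.
move=> v0 [M [f [N [_ [-> [e ->]]]]]] s; split.
- apply: clos_mono => t ht; apply: (@scale_sub (v^-1) N M f); rewrite ?invr_gt0 //.
  have e2 : [seq (j%:~R : rat) | j <- M] =
             [seq v^-1 * y | y <- [seq (j%:~R : rat) | j <- N]].
    by rewrite e -map_comp; apply: eq_map => j /=; rewrite mulKf // gt_eqF.
  by rewrite e2 -map_comp.
- apply: clos_mono => t ht; exact: (scale_sub v0 e).
Qed.

Lemma Keq_sim Phi Psi : sim Phi Psi -> Keq Phi Psi.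
Proof.
move=> [P' [Q' [v [v0 [[t [gt eP]] [[t' [gt' eQ]] sc']]]]]] s.
have h1 := Keq_group Phi gt; have h2 := Keq_group Psi gt'.
have h3 := Keq_scaled v0 sc'.
rewrite h1 -eP h3 eQ -h2 //.
Qed.

Lemma Keq_simE Phi Psi : simE Phi Psi -> Keq Phi Psi.
Proof.
elim=> {Phi Psi} [P Q /Keq_sim //|P s|P Q _ ih s|P Q R _ ih1 _ ih2 s] //.
- by rewrite ih.
- by rewrite ih1 ih2.
Qed.

Local Open Scope ring_scope.

Definition eca (s : seq bool) : gmap :=
  phi [:: -1; 0; 1] (fun w => dec s (nth false w 0) (nth false w 1) (nth false w 2)).

Lemma eca_apply s x i : eca s x i = dec s (x (i - 1)) (x i) (x (i + 1)).
Proof. by rewrite /eca /phi /= addr0. Qed.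

Lemma ECA_eca s : ECA (eca s).
Proof. by eexists. Qed.

Lemma scaled_refl M f : sorted (fun a b : int => a < b) M -> scaled 1 (phi M f) (phi M f).
Proof.
move=> hM; exists M, f, M; do 3!split => //.
by apply: eq_map => j; rewrite mul1r.
Qed.

Lemma sim_cong s Psi : cong Psi (eca s) -> sim (eca s) Psi.
Proof.
move=> h; exists (eca s), (eca s), 1; split; first by [].
split; first by exists (fun P => P); split => //; constructor.
split; first exact: h.
exact: (@scaled_refl [:: -1; 0; 1]).
Qed.

Lemma rHat_eca s : rHat (eca (revc s)) = eca s.
Proof.
apply: gm_ext => x i; rewrite /rHat /refl eca_apply dec_code eca_apply.
by rewrite !opprD !opprK.
Qed.

Lemma cHat_eca s : cHat (eca (compc s)) = eca s.
Proof.
apply: gm_ext => x i; rewrite /cHat /cswap eca_apply dec_code !negbK.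
by rewrite eca_apply.
Qed.

Definition mergec s := code (fun a b c => dec s a false b).
Definition indepb s := s == code (fun a b c => dec s a false c).

Lemma merge_sim s : indepb s -> sim (eca (mergec s)) (eca s).
Proof.
move=> /eqP hs.
pose g2 := fun w : seq bool => dec s (nth false w 0) false (nth false w 1).
exists (sigmaOp (eca (mergec s))), (sigmaOp (eca s)), 2; split => //; split.
  by exists (fun P => sigmaOp P); split => //; do 2!constructor.
split.
  by exists (fun P => sigmaOp P); split => //; do 2!constructor.
exists [:: 0; 1], g2, [:: 0; 2]; split => //; split.
  apply: gm_ext => x i; rewrite /sigmaOp /shift eca_apply dec_code /phi /g2 /=.
  by rewrite addrK addr0.
split.
  by rewrite /= mulr0 mulr1.
apply: gm_ext => x i; rewrite /sigmaOp /shift eca_apply hs dec_code /phi /g2 /=.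
by rewrite addrK addr0 -addrA.
Qed.

Local Open Scope ring_scope.

Definition edge s t :=
  [|| t == revc s, t == compc s | indepb s && (t == mergec s)].

Lemma edge_simE s t : edge s t -> simE (eca s) (eca t).
Proof.
case/or3P => [/eqP ->|/eqP ->|/andP [hi /eqP ->]].
- apply: rst_step; apply: sim_cong.
  by exists (fun P => rHat P); split; [do 2!constructor | rewrite rHat_eca].
- apply: rst_step; apply: sim_cong.
  by exists (fun P => cHat P); split; [do 2!constructor | rewrite cHat_eca].
- by apply: rst_sym; apply: rst_step; apply: merge_sim.
Qed.

Local Open Scope nat_scope.
Definition bits (n : nat) : seq bool := mkseq (fun i => odd (n %/ 2 ^ i)) 8.

Definition uedge (a b : nat) := edge (bits a) (bits b) || edge (bits b) (bits a).

Lemma path_simE x p : path uedge x p -> simE (eca (bits x)) (eca (bits (last x p))).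
Proof.
elim: p x => [|y p ih] x /=; first by move=> _; apply: rst_refl.
case/andP => /orP [h|h] /ih hp; apply: rst_trans hp.
- exact: edge_simE.
- by apply: rst_sym; apply: edge_simE.
Qed.
Definition repsN : seq nat := [:: 0; 1; 2; 3; 4; 6; 7; 8; 9; 10; 11; 13; 14; 15; 18; 19; 22; 23; 24; 25; 26; 27; 28; 29; 30; 32; 33; 35; 36; 37; 38; 40; 41; 42; 43; 44; 45; 46; 50; 54; 56; 57; 58; 60; 62; 72; 73; 74; 76; 77; 78; 94; 104; 105; 106; 108; 110; 122; 126; 128; 130; 132; 134; 136; 138; 140; 142; 146; 150; 152; 154; 156; 162; 164; 168; 170; 172; 178; 184; 200; 232].
Definition certs : seq (seq nat) := [:: [:: ]; [:: ]; [:: ]; [:: ]; [:: ]; [:: 3]; [:: ]; [:: ]; [:: ]; [:: ]; [:: ]; [:: ]; [:: 10]; [:: ]; [:: ]; [:: ]; [:: 2]; [:: 3]; [:: ]; [:: ]; [:: 6]; [:: 7]; [:: ]; [:: ]; [:: ]; [:: ]; [:: ]; [:: ]; [:: ]; [:: ]; [:: ]; [:: 7]; [:: ]; [:: ]; [:: 48; 80; 10]; [:: ]; [:: ]; [:: ]; [:: ]; [:: 27]; [:: ]; [:: ]; [:: ]; [:: ]; [:: ]; [:: ]; [:: ]; [:: 11]; [:: 80; 10]; [:: 35]; [:: ]; [:: 85; 15]; [:: 38]; [:: 39; 27]; [:: ]; [:: 19]; [:: ]; [:: ]; [:: ]; [:: 35]; [:: ]; [:: 67; 25]; [:: ]; [::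 3]; [:: 8]; [:: 9]; [:: 24]; [:: 25]; [:: 12; 10]; [:: 13]; [:: 28]; [:: 29]; [:: ]; [:: ]; [:: ]; [:: 45]; [:: ]; [:: ]; [:: ]; [:: 13]; [:: 10]; [:: 11]; [:: 26]; [:: 27]; [:: 14]; [:: 15]; [:: 30]; [:: 21; 7]; [:: 74]; [:: 75; 45]; [:: 60]; [:: 37]; [:: 78]; [:: 69; 13]; [:: ]; [:: 5; 3]; [:: 40]; [:: 41]; [:: 56]; [:: 57]; [:: 44]; [:: 45]; [:: 60]; [:: 25]; [:: ]; [:: ]; [:: ]; [:: 41]; [:: ]; [:: 73]; [:: ]; [:: 9]; [:: 42]; [:: 43]; [:: 58]; [:: 49; 35]; [:: 46]; [:: 47; 11]; [:: 62]; [:: 17; 3]; [:: 106]; [:: 97; 41]; [:: ]; [:: 33]; [:: 110]; [:: 65; 9]; [:: ]; [:: 1]; [:: ]; [:: 126]; [:: ]; [:: 62]; [:: ]; [:: 94]; [:: ]; [:: 30]; [:: ]; [:: 110]; [:: ]; [:: 46]; [:: ]; [:: 78]; [:: ]; [:: 14]; [:: 130]; [:: 118; 62]; [:: ]; [:: 54]; [:: 134]; [:: 86; 30]; [:: ]; [:: 22]; [:: ]; [:: 102; 60]; [:: ]; [:: 38]; [:: ]; [:: 70; 28]; [:: 134]; [:: 6]; [:: 192; 136]; [:: 122]; [:: ]; [:: 58]; [:: ]; [:: 90; 60]; [:: 154]; [:: 26]; [:: ]; [:: 106]; [:: ]; [:: 42]; [:: ]; [:: 74]; [:: 138]; [:: 10];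 [:: 162]; [:: 114; 58]; [:: ]; [:: 50]; [:: 166; 154]; [:: 82; 26]; [:: 146]; [:: 18]; [:: ]; [:: 98; 56]; [:: 162]; [:: 34; 48; 80; 10]; [:: 194; 152]; [:: 66; 24]; [:: 130]; [:: 2]; [:: 136]; [:: 124; 110]; [:: 152]; [:: 60]; [:: 140]; [:: 92; 78]; [:: 156]; [:: 28]; [:: ]; [:: 108]; [:: 172]; [:: 44]; [:: 170]; [:: 76]; [:: 140]; [:: 12; 10]; [:: 138]; [:: 116; 46]; [:: 154]; [:: 52; 38]; [:: 142]; [:: 84; 14]; [:: 148; 134]; [:: 20; 6]; [:: 202; 172]; [:: 100; 44]; [:: 164]; [:: 36]; [:: 196; 140]; [:: 68; 12; 10]; [:: 132]; [:: 4]; [:: 168]; [:: 120; 106]; [:: 184]; [:: 56]; [:: 172]; [:: 88; 74]; [:: 152]; [:: 24]; [:: ]; [:: 104]; [:: 168]; [:: 40]; [:: 200]; [:: 72]; [:: 136]; [:: 8]; [:: 170]; [:: 112; 42]; [:: 176; 162]; [:: 48; 80; 10]; [:: 174; 138]; [:: 80; 10]; [:: 144; 130]; [:: 16; 2]; [:: 224; 168]; [:: 96; 40]; [:: 160; 192; 136]; [:: 32]; [:: 192; 136]; [:: 64; 8]; [:: 128]; [:: 0]].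

Definition certOK := all (fun n => let p := nth [::] certs n in
   path uedge n p && (last n p \in repsN)) (iota 0 256).
Lemma certOK_true : certOK. Proof. by vm_compute. Qed.

Lemma code_bits g : exists2 n, n < 256 & code g = bits n.
Proof.
rewrite /code.
move: (g false false false) (g false false true) (g false true false) (g false true true)
  (g true false false) (g true false true) (g true true false) (g true true true).
move=> b0 b1 b2 b3 b4 b5 b6 b7.
exists (b0 + 2 * b1 + 4 * b2 + 8 * b3 + 16 * b4 + 32 * b5 + 64 * b6 + 128 * b7).
  by case: b0; case: b1; case: b2; case: b3; case: b4; case: b5; case: b6; case: b7.
by case: b0; case: b1; case: b2; case: b3; case: b4; case: b5; case: b6; case: b7; vm_compute.
Qed.

Local Open Scope ring_scope.

Lemma ECA_code Phi : ECA Phi -> exists2 n, (n < 256)%N & Phi = eca (bits n).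
Proof.
case=> f ->; have [n hn e] := code_bits (fun a b c => f [:: a; b; c]).
exists n => //; rewrite -e; apply: gm_ext => x i.
by rewrite eca_apply dec_code /phi /= addr0.
Qed.

Lemma cover_rep n : (n < 256)%N -> exists2 r, r \in repsN & simE (eca (bits n)) (eca (bits r)).
Proof.
move=> hn; have := certOK_true; rewrite /certOK => /allP /(_ n).
rewrite mem_iota add0n => /(_ hn) /andP [hp hr].
by exists (last n (nth [::] certs n)) => //; apply: path_simE.
Qed.

Definition Fd s (d : int) a b c := dec s (sc 0 a b c (d - 1)) (sc 0 a b c d) (sc 0 a b c (d + 1)).
Definition L5 s := [seq code (Fd s d) | d <- [:: -2; -1; 0; 1; 2]].

Lemma L5_sound s t : t \in L5 s -> Gset (eca s) t.
Proof.
case/mapP => d _ ->; exists 0, d; apply: code_ext => a b c.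
by rewrite eca_apply.
Qed.

Lemma sc0_lt d a b c : d < 0 -> sc 0 a b c d = a.
Proof. by rewrite /sc => ->. Qed.
Lemma sc0_gt d a b c : 0 < d -> sc 0 a b c d = c.
Proof. by rewrite /sc => h; rewrite ltNge ltW //= gt_eqF. Qed.

Lemma Gset_L5 s t : Gset (eca s) t -> t \in L5 s.
Proof.
case=> p [q ->].
have E k a b c : sc p a b c (q + k) = sc 0 a b c (q - p + k).
  by rewrite /sc -subr_lt0 -subr_eq0 addrAC.
have -> : code (fun a b c => eca s (sc p a b c) q) = code (Fd s (q - p)).
  apply: code_ext => a b c.
  have E0 : sc p a b c q = sc 0 a b c (q - p) by rewrite /sc -subr_lt0 -subr_eq0.
  by rewrite eca_apply /Fd !E E0.
have : q - p <= -2 \/ q - p = -1 \/ q - p = 0 \/ q - p = 1 \/ 2 <= q - p by lia.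
case=> [h|[->|[->|[->|h]]]]; try by apply: map_f; rewrite !inE.
- have -> : code (Fd s (q - p)) = code (Fd s (-2)).
    apply: code_ext => a b c; rewrite /Fd !sc0_lt //; lia.
  by apply: map_f; rewrite !inE.
- have -> : code (Fd s (q - p)) = code (Fd s 2).
    apply: code_ext => a b c; rewrite /Fd !sc0_gt //; lia.
  by apply: map_f; rewrite !inE.
Qed.

Close Scope ring_scope.

Definition kstep (S : seq (seq bool)) :=
  undup (S ++ flatten [seq [:: op1 t; op2 t; revc t; compc t] | t <- S]).
Definition kclos s := iter 6 kstep (L5 s).
Definition closedb (S : seq (seq bool)) :=
  all (fun t => [&& op1 t \in S, op2 t \in S, revc t \in S & compc t \in S]) S.

Lemma kstep_sub S t : t \in S -> t \in kstep S.
Proof. by move=> h; rewrite mem_undup mem_cat h. Qed.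

Lemma iter_sound n L t : t \in iter n kstep L -> clos (fun u => u \in L) t.
Proof.
elim: n t => [|n ih] t /=; first exact: cl_in.
rewrite mem_undup mem_cat => /orP [/ih //|/flattenP [u /mapP [w hw ->]]].
rewrite !inE => /or4P [] /eqP ->.
- exact/cl_1/ih.
- exact/cl_2/ih.
- exact/cl_r/ih.
- exact/cl_c/ih.
Qed.

Lemma iter_sub n L t : t \in L -> t \in iter n kstep L.
Proof. elim: n => [//|n ih] /= h; exact/kstep_sub/ih. Qed.

Lemma closed_complete (P : seq bool -> Prop) S :
  closedb S -> (forall u, P u -> u \in S) -> forall t, clos P t -> t \in S.
Proof.
move=> /allP hS hP t; elim=> {t} [t /hP //|t _ ih|t _ ih|t _ ih|t _ ih];
  by case/and4P: (hS t ih).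
Qed.

Lemma kclos_sound s t : t \in kclos s -> Kinv (eca s) t.
Proof.
move/iter_sound; apply: clos_mono => u /L5_sound; exact: cl_in.
Qed.

Lemma kclos_complete s t : closedb (kclos s) -> Kinv (eca s) t -> t \in kclos s.
Proof.
move=> hc; apply: closed_complete => // u /Gset_L5; exact: iter_sub.
Qed.

Definition rep (k : nat) := bits (nth 0 repsN k).

Definition sepb (A B : seq (seq bool)) :=
  ~~ all (fun t => t \in B) A || ~~ all (fun t => t \in A) B.
Definition distOKf (KS : seq (seq (seq bool))) :=
  all (fun i => all (fun j => (i == j) || sepb (nth [::] KS i) (nth [::] KS j))
     (iota 0 81)) (iota 0 81).
Definition KS := [seq kclos (rep i) | i <- iota 0 81].
Lemma distOK_true : distOKf KS. Proof. by vm_compute. Qed.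
Lemma distOK_gen L : distOKf L -> forall i j, (i < 81)%N -> (j < 81)%N -> i != j ->
  sepb (nth [::] L i) (nth [::] L j).
Proof.
move=> /allP h i j hi hj hne.
have := h i; rewrite mem_iota add0n => /(_ hi) /allP h2.
have := h2 j; rewrite mem_iota add0n => /(_ hj).
by rewrite (negbTE hne).
Qed.
Definition closedOK := all (fun i => closedb (kclos (rep i))) (iota 0 81).
Lemma closedOK_true : closedOK. Proof. by vm_compute. Qed.
Lemma repsN_size : size repsN = 81. Proof. by []. Qed.

Lemma closed_rep l : (l < 81)%N -> closedb (kclos (rep l)).
Proof. by move=> h; move/allP: closedOK_true => /(_ l); rewrite mem_iota => /(_ h). Qed.

Lemma sep k l : (l < 81)%N -> ~~ all (fun t => t \in kclos (rep l)) (kclos (rep k)) ->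
  ~ Keq (eca (rep k)) (eca (rep l)).
Proof.
move=> hl /allPn [t ht ntl] hK.
by move/negP: ntl; apply; apply: kclos_complete; [exact: closed_rep|apply/hK/kclos_sound].
Qed.

Lemma nthKS i : (i < 81)%N -> nth [::] KS i = kclos (rep i).
Proof.
move=> h; have e : nth 0%N (iota 0 81) i = i by rewrite nth_iota.
rewrite /KS (nth_map 0%N); first by rewrite e.
by rewrite size_iota.
Qed.

Theorem mainTheorem12 :
  exists reps : 'I_81 -> gmap,
    (forall k, ECA (reps k)) /\
    (forall k l, simE (reps k) (reps l) -> k = l) /\
    (forall Phi, ECA Phi -> exists k, simE Phi (reps k)).
Proof.
exists (fun k : 'I_81 => eca (rep k)); split; first by move=> k; apply: ECA_eca.
split.
- move=> k l /Keq_simE hK; apply: val_inj; apply/eqP; apply/negPn/negP => hne.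
  have := distOK_gen distOK_true (ltn_ord k) (ltn_ord l) hne.
  rewrite /sepb !nthKS ?ltn_ord // => /orP [h|h].
  + exact: (sep (ltn_ord l) h).
  + by apply: (sep (ltn_ord k) h) => s; rewrite hK.
- move=> Phi /ECA_code [n hn ->]; have [r hr hs] := cover_rep hn.
  have hi : (index r repsN < 81)%N by rewrite -repsN_size index_mem.
  exists (Ordinal hi); cbv beta; rewrite /rep.
  by rewrite (_ : nat_of_ord (Ordinal hi) = index r repsN) // nth_index.
Qed.
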